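(* Let $G=(V,E)$ be a control flow graph, let $p$ be a predicate node with successors $s_1,s_2$ in $G$ and with at least two successors in $A_p$, and let $i\in\{1,2\}$. For each maximal path from $s_i$ in $G$ there exists a maximal path in $A_p$ starting from a node of $V_i$ with the same order of the first occurrences of all nodes from $V_p\setminus\{p\}$, and vice versa (for each maximal path in $A_p$ starting from a node of $V_i$ there exists a maximal path from $s_i$ in $G$ with the same order of the first occurrences of all nodes from $V_p\setminus\{p\}$).
   Context: A control flow graph (CFG) is a finite directed graph $G=(V,E)$ in which every node has at most two outgoing edges; nodes with exactly two outgoing edges are predicate nodes. A path from $n_1$ is a nonempty finite or infinite sequence of nodes with each adjacent pair an edge; it is maximal if it is infinite or its last node has no successor. $V_p$ is the set of nodes occurring on all maximal paths from $p$ in $G$. For $V'\subseteq V$, a $V'$-interval from $x$ to $y$ is a finite path $n_1\ldots n_k$ in $G$ with $k\ge 2$, $n_1=x\in V'$, $n_k=y\in V'$, and $n_i\notin V'$ for $1<i<k$. $A_p$ is the directed graph with node set $V_p$ and an edge $(x,y)$ iff there is a $V_p$-interval from $x$ to $y$ in $G$. For $i\in\{1,2\}$, $V_i$ is the set of nodes $n\in V_p$ such that there is a finite path in $G$ from $s_i$ to $n$ whose nodes other than the last one all lie outside $V_p$ (i.e., a path $s_i\ldots n\in (V\setminus V_p)^*.V_p$; possibly $n=s_i$). *)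

(* Defs.v *)
From mathcomp Require Import all_boot.
Set Implicit Arguments. Unset Strict Implicit. Unset Printing Implicit Defensive.

Section CFG.
Variable T : finType.

(* A path: nonempty finite sequence [x :: s] or infinite sequence f. *)
Inductive gpath : Type :=
  | FinP (x : T) (s : seq T)
  | InfP (f : nat -> T).

Fixpoint fin_path (r : T -> T -> Prop) (x : T) (s : seq T) : Prop :=
  match s with
  | [::] => True
  | y :: s' => r x y /\ fin_path r y s'
  end.

Definition is_path (r : T -> T -> Prop) (q : gpath) : Prop :=
  match q with
  | FinP x s => fin_path r x s
  | InfP f => forall n, r (f n) (f n.+1)
  end.

Definition start (q : gpath) : T :=
  match q with FinP x _ => x | InfP f => f 0 end.

Definition maximal (r : T -> T -> Prop) (q : gpath) : Prop :=
  match q with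
  | FinP x s => ~ (exists y, r (last x s) y)
  | InfP _ => True
  end.

Definition node_at (q : gpath) (n : nat) (y : T) : Prop :=
  match q with
  | FinP x s => n <= size s /\ nth x (x :: s) n = y
  | InfP f => f n = y
  end.

Definition occurs (y : T) (q : gpath) : Prop := exists n, node_at q n y.

Definition Vp (E : rel T) (p : T) (y : T) : Prop :=
  forall q, is_path (fun a b => E a b) q -> maximal (fun a b => E a b) q ->
    start q = p -> occurs y q.

Definition interval (E : rel T) (V' : T -> Prop) (x y : T) : Prop :=
  V' x /\ V' y /\
  exists s : seq T, fin_path (fun a b => E a b) x (rcons s y) /\
                    (forall z, z \in s -> ~ V' z).

Definition Ap (E : rel T) (p : T) (x y : T) : Prop :=
  Vp E p x /\ Vp E p y /\ interval E (Vp E p) x y.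

Definition Vi (E : rel T) (p si : T) (n : T) : Prop :=
  Vp E p n /\
  exists s : seq T, fin_path (fun a b => E a b) si s /\ last si s = n /\
                    (forall z, z \in belast si s -> ~ Vp E p z).

Definition is_CFG (E : rel T) : Prop := forall x, #|[set y | E x y]| <= 2.

Definition first_idx (q : gpath) (y : T) (n : nat) : Prop :=
  node_at q n y /\ forall m, m < n -> ~ node_at q m y.

Definition first_occ_seq (W : T -> Prop) (q : gpath) (l : seq T) : Prop :=
  uniq l /\
  (forall y, y \in l <-> (W y /\ occurs y q)) /\
  (forall i j, i < j < size l ->
     exists ni nj, first_idx q (nth (start q) l i) ni /\
                   first_idx q (nth (start q) l j) nj /\ ni < nj).

Definition same_first_order (W : T -> Prop) (q1 q2 : gpath) : Prop :=
  exists l, first_occ_seq W q1 l /\ first_occ_seq W q2 l.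

End CFG.

(* Main.v *)
Require Import Defs.
From mathcomp Require Import all_boot zify.
From Stdlib Require Import ClassicalEpsilon.
Set Implicit Arguments. Unset Strict Implicit. Unset Printing Implicit Defensive.

Section Gen.
Variable T : finType.
Implicit Types (r : T -> T -> Prop) (x y z : T) (s t : seq T).

Lemma fin_path_nth r x t j : fin_path r x t -> j < size t ->
  r (nth x (x::t) j) (nth x (x::t) j.+1).
Proof.
elim: t x j => [|y t IH] x j //= [Hxy Hp] Hj.
case: j Hj => [|j] Hj //=.
have := IH y j Hp Hj => /=.
by rewrite !(set_nth_default y x) //= ltnS // ltnW.
Qed.

Lemma fin_path_cat r x s1 s2 :
  fin_path r x (s1 ++ s2) <-> fin_path r x s1 /\ fin_path r (last x s1) s2.
Proof.
elim: s1 x => [|y s1 IH] x /=; first by split => // [[]].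
rewrite IH; tauto.
Qed.

Lemma fin_path_rcons r x s y :
  fin_path r x (rcons s y) <-> fin_path r x s /\ r (last x s) y.
Proof. by rewrite -cats1 fin_path_cat /=; tauto. Qed.

Lemma fin_path_iota r (f : nat -> T) a n :
  (forall k, a <= k < a + n -> r (f k) (f k.+1)) ->
  fin_path r (f a) [seq f m | m <- iota a.+1 n].
Proof.
elim: n a => [|n IH] a H //=.
split; first by apply: H; lia.
apply: IH => k Hk; apply: H; lia.
Qed.

Lemma last_iota_map (f : nat -> T) a n :
  last (f a) [seq f m | m <- iota a.+1 n] = f (a + n).
Proof.
elim: n a => [|n IH] a /=; first by rewrite addn0.
by rewrite IH addSnnS.
Qed.

Definition pb (P : Prop) : bool := if excluded_middle_informative P then true else false.
Lemma pbP (P : Prop) : reflect P (pb P).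
Proof. by rewrite /pb; case: excluded_middle_informative => H; constructor. Qed.

Lemma node_at0 (q : gpath T) y : node_at q 0 y -> y = start q.
Proof. by case: q => [x s [_ <-]|f <-]. Qed.

Lemma node_at_start (q : gpath T) : node_at q 0 (start q).
Proof. by case: q. Qed.

Definition prep x s (q : gpath T) : gpath T :=
  match q with
  | FinP y t => FinP x (s ++ y :: t)
  | InfP f => InfP (fun n => if n <= size s then nth x (x::s) n else f (n - (size s).+1))
  end.

Lemma prep_start x s (q : gpath T) : start (prep x s q) = x.
Proof. by case: q. Qed.

Lemma prep_path r x s (q : gpath T) : is_path r q -> fin_path r x (rcons s (start q)) ->
  is_path r (prep x s q).
Proof.
case: q => [y t|f] /= Hq Hs.
  by apply/fin_path_cat; move/fin_path_rcons: Hs => [H1 H2].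
move=> n.
have Hs' := Hs; move/fin_path_rcons: Hs' => [H1 H2].
case: (ltngtP n (size s)) => Hn.
- exact: fin_path_nth H1 Hn.
- have -> : n.+1 - (size s).+1 = (n - (size s).+1).+1 by lia.
  exact: Hq.
- rewrite Hn subnn.
  have -> : nth x (x :: s) (size s) = last x s by rewrite -[RHS]/(last x (x::s)) -nth_last.
  exact: H2.
Qed.

Lemma prep_max r x s (q : gpath T) : maximal r q -> maximal r (prep x s q).
Proof. by case: q => [y t|f] //=; rewrite last_cat. Qed.

Lemma prep_occurs x s (q : gpath T) z : occurs z (prep x s q) -> z \in x :: s \/ occurs z q.
Proof.
case: q => [y t|f] [n] /=.
  rewrite -cat_cons nth_cat size_cat /= => [[Hn <-]].
  case: ifP => Hn'; first by left; apply: mem_nth.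
  right; exists (n - (size s).+1) => /=; split; first by lia.
  apply: set_nth_default => /=; lia.
case: ifP => Hn <-; first by left; apply: mem_nth.
by right; exists (n - (size s).+1).
Qed.

Lemma prep_node_at x s (q : gpath T) j z : node_at q j z -> node_at (prep x s q) ((size s).+1 + j) z.
Proof.
case: q => [y t|f] /=.
  move=> [Hj <-]; rewrite size_cat /=; split; first by lia.
  rewrite nth_cat ltnNge leq_addr /= addKn.
  apply: set_nth_default => /=; lia.
move=> <-; rewrite leqNgt (_ : size s < (size s).+1 + j) /=; last by lia.
by rewrite addKn.
Qed.

Lemma drop_facts r x s n : n <= size s -> fin_path r x s ->
  fin_path r (nth x (x::s) n) (drop n s) /\
  last (nth x (x::s) n) (drop n s) = last x s /\
  (forall j, j <= size s - n ->
     nth (nth x (x::s) n) (nth x (x::s) n :: drop n s) j = nth x (x::s) (n + j)).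
Proof.
elim: s x n => [|y s IH] x n.
  by rewrite leqn0 => /eqP -> /=; split => //; split => // j; rewrite leqn0 => /eqP ->.
case: n => [|n] Hn /= Hp.
  by split; [|split] => //.
have Hn' : n <= size s by [].
have [H1 [H2 H3]] := IH y n Hn' (proj2 Hp).
have E1 : nth x (y :: s) n = nth y (y :: s) n by apply: set_nth_default; rewrite /= ltnS.
rewrite E1; split => //; split => // j Hj.
rewrite H3; last by rewrite subSS in Hj. apply: set_nth_default; rewrite /=; lia.
Qed.

Lemma suffix r (q : gpath T) n z : is_path r q -> maximal r q -> node_at q n z ->
  exists q2, is_path r q2 /\ maximal r q2 /\ start q2 = z /\
    forall j w, node_at q2 j w -> node_at q (n + j) w.
Proof.
case: q => [x s|f] /=.
  move=> Hp Hm [Hn Hz].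
  have [H1 [H2 H3]] := drop_facts Hn Hp.
  exists (FinP (nth x (x::s) n) (drop n s)); split => //; split.
    by rewrite /= H2.
  split; first by [].
  move=> j w /= [Hj <-]; rewrite size_drop in Hj.
  split; first by lia.
  by rewrite H3.
move=> Hp _ Hz; exists (InfP (fun m => f (n + m))); split => /=.
  by move=> m; rewrite addnS.
by rewrite addn0.
Qed.

End Gen.

Section Gen2.
Variable T : finType.
Implicit Types (r : T -> T -> Prop) (x y z : T) (s t : seq T).

Section Blocks.
Variables (r : T -> T -> Prop) (v : nat -> T) (bs : nat -> seq T).
Hypothesis Hb : forall k, fin_path r (v k) (rcons (bs k) (v k.+1)).

Definition bstep (kj : nat * nat) :=
  if kj.2 < size (bs kj.1) then (kj.1, kj.2.+1) else (kj.1.+1, 0).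
Definition bst n := iter n bstep (0,0).
Definition bF n := nth (v (bst n).1) (v (bst n).1 :: bs (bst n).1) (bst n).2.
Fixpoint bpos k := if k is k'.+1 then bpos k' + (size (bs k')).+1 else 0.

Lemma bst_pos k j : j <= size (bs k) -> bst (bpos k + j) = (k, j).
Proof.
elim: k j => [|k IHk] j.
  elim: j => [|j IHj] //= Hj.
  have := IHj (ltnW Hj); rewrite /= add0n => ->.
  by rewrite /bstep /= Hj.
elim: j => [|j IHj] Hj.
  rewrite /= addn0 addnS /bst iterS -/(bst _) IHk //.
  by rewrite /bstep /= ltnn.
rewrite addnS /bst iterS -/(bst _) IHj; last exact: ltnW.
by rewrite /bstep /= Hj.
Qed.

Lemma bF_pos k j : j <= size (bs k) -> bF (bpos k + j) = nth (v k) (v k :: bs k) j.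
Proof. by move=> Hj; rewrite /bF bst_pos. Qed.

Lemma bF_bpos k : bF (bpos k) = v k.
Proof. by rewrite -[bpos k]addn0 bF_pos. Qed.

Lemma bdecomp n : exists k j, j <= size (bs k) /\ n = bpos k + j.
Proof.
elim: n => [|n [k [j [Hj ->]]]]; first by exists 0, 0.
case: (ltngtP j (size (bs k))) => Hj'.
- by exists k, j.+1; rewrite addnS.
- by move: Hj; rewrite leqNgt Hj'.
- by exists k.+1, 0; rewrite /= addn0 Hj' addnS.
Qed.

Lemma bF_path n : r (bF n) (bF n.+1).
Proof.
have [k [j [Hj ->]]] := bdecomp n.
have Hp := fin_path_nth (Hb k) (_ : j < size (rcons (bs k) (v k.+1))).
rewrite size_rcons ltnS in Hp; have {Hp} := Hp Hj.
rewrite -rcons_cons !nth_rcons /= ltnS Hj.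
case: (ltngtP j (size (bs k))) => Hj'.
- rewrite ltnS Hj' => H.
  by rewrite -addnS !bF_pos.
- by move: Hj; rewrite leqNgt Hj'.
- rewrite Hj' ltnn eqxx => H.
  rewrite bF_pos // -addnS (_ : bpos k + (size (bs k)).+1 = bpos k.+1) //.
  by rewrite bF_bpos.
Qed.

Lemma bpos_lt k : bpos k < bpos k.+1.
Proof. by rewrite /= addnS ltnS leq_addr. Qed.

End Blocks.

Lemma ex_maximal (E : rel T) u :
  exists q, is_path (fun a b => E a b) q /\ maximal (fun a b => E a b) q /\ start q = u.
Proof.
pose nxt x := if [pick y | E x y] is Some y then y else x.
pose f n := iter n nxt u.
case: (pbP (exists n, ~~ E (f n) (f n.+1))) => H.
  case: (ex_minnP H) => m Hm Hmin.
  exists (FinP u [seq f k | k <- iota 1 m]); split => /=.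
    apply: (@fin_path_iota _ _ f 0 m) => k Hk.
    case: (boolP (E (f k) (f k.+1))) => // Hn.
    by have := Hmin _ Hn; lia.
  split => //.
  rewrite -[u]/(f 0) last_iota_map add0n => -[y Hy].
  move: Hm; rewrite /f iterS -/(f m) /nxt.
  case: pickP => [y' ->|Hn] //.
  by rewrite Hn in Hy.
exists (InfP f); split => //= n.
case: (boolP (E (f n) (f n.+1))) => // Hn.
by case: H; exists n.
Qed.

Lemma ex_first_occ (W : T -> Prop) (h : nat -> T) :
  exists l, first_occ_seq W (InfP h) l.
Proof.
pose fi y := match excluded_middle_informative (exists n, h n == y) with
  | left H => ex_minn H | right _ => 0 end.
have fiP y : occurs y (InfP h) -> first_idx (InfP h) y (fi y).
  move=> [n Hn]; rewrite /fi.
  case: excluded_middle_informative => [H|H]; last by case: H; exists n; apply/eqP.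
  case: (ex_minnP H) => m /eqP Hm Hmin; split => // k Hk /= Hk'.
  by have := Hmin k (introT eqP Hk'); lia.
pose S := [seq y <- enum T | pb (W y /\ occurs y (InfP h))].
pose le := fun a b => fi a <= fi b.
exists (sort le S).
have memS y : (y \in sort le S) <-> (W y /\ occurs y (InfP h)).
  by rewrite mem_sort mem_filter mem_enum andbT; split => /pbP.
split; first by rewrite sort_uniq filter_uniq // enum_uniq.
split; first exact: memS.
move=> i j /andP [Hij Hj].
have Hi : i < size (sort le S) by apply: ltn_trans Hj.
set a := nth _ _ i; set b := nth _ _ j.
have [_ Ha] : W a /\ occurs a (InfP h) by apply/memS; apply: mem_nth.
have [_ Hb] : W b /\ occurs b (InfP h) by apply/memS; apply: mem_nth.
exists (fi a), (fi b); split; first exact: fiP.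
split; first exact: fiP.
have Hle : le a b.
  apply: (sorted_leq_nth (leT := le)) => //.
  - by move=> x1 x2 x3; rewrite /le; apply: leq_trans.
  - by move=> x1; rewrite /le.
  - by apply: sort_sorted => x1 x2; rewrite /le leq_total.
  - exact: ltnW.
rewrite /le in Hle; rewrite ltn_neqAle Hle andbT.
apply/negP => /eqP Heq.
have US : uniq (sort le S) by rewrite sort_uniq filter_uniq // enum_uniq.
have Hab : a != b by rewrite nth_uniq // neq_ltn Hij.
have [Ha1 _] := fiP a Ha; have [Hb1 _] := fiP b Hb.
move: Ha1 Hb1; rewrite /= Heq => -> Hb1.
by rewrite Hb1 eqxx in Hab.
Qed.

Lemma transfer (W : T -> Prop) (F h : nat -> T) (g : nat -> nat) l :
  (forall k, g k < g k.+1) -> (forall k, F (g k) = h k) ->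
  (forall n, W (F n) -> exists k, g k = n) ->
  first_occ_seq W (InfP h) l -> first_occ_seq W (InfP F) l.
Proof.
move=> Hg HF HW [Hu [Hm Ho]].
have mono : {homo g : i j / i < j} by apply: homo_ltn => // ? ? ?; apply: ltn_trans.
have mono' a b : g a < g b -> a < b.
  move=> H; rewrite ltnNge; apply/negP; rewrite leq_eqVlt => /orP [/eqP E|/mono H'].
    by rewrite E ltnn in H.
  by have := ltn_trans H H'; rewrite ltnn.
have tr y n : W y -> first_idx (InfP h) y n -> first_idx (InfP F) y (g n).
  move=> Wy [/= Hn Hmin]; split => /=; first by rewrite HF.
  move=> m Hm' Fm.
  have [k Hk] : exists k, g k = m by apply: HW; rewrite Fm.
  apply: (Hmin k); first by apply: mono'; rewrite Hk.
  by rewrite /= -HF Hk.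
split => //; split.
  move=> y; rewrite Hm; split => -[Wy [n Hn]]; split => //.
    by exists (g n); rewrite /= HF.
  have [k Hk] : exists k, g k = n by apply: HW; rewrite /= in Hn; rewrite Hn.
  by exists k; rewrite /= -HF Hk.
move=> i j Hij.
have [ni [nj [Hi [Hj Hlt]]]] := Ho i j Hij.
have Hi' : i < size l by case/andP: Hij => ? ?; apply: ltn_trans; eauto.
have Hj' : j < size l by case/andP: Hij.
exists (g ni), (g nj).
have Wi : W (nth (start (InfP h)) l i) by have /Hm [] := mem_nth (start (InfP h)) Hi'.
have Wj : W (nth (start (InfP h)) l j) by have /Hm [] := mem_nth (start (InfP h)) Hj'.
rewrite /= !(set_nth_default (h 0) (F 0)) //.
split; first exact: tr.
split; first exact: tr.
exact: mono.
Qed.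

End Gen2.

Section Main.
Variable T : finType.
Variables (E : rel T) (p : T).
Local Notation RE := (fun a b : T => E a b).
Local Notation VP := (Vp E p).

Lemma seg_Ap (f : nat -> T) a b : (forall n, E (f n) (f n.+1)) -> a < b ->
  VP (f a) -> VP (f b) -> (forall c, a < c < b -> ~ VP (f c)) -> Ap E p (f a) (f b).
Proof.
move=> Hf Hab Ha Hb Hc; split => //; split => //; split => //; split => //.
exists [seq f m | m <- iota a.+1 (b - a.+1)]; split.
  have -> : rcons [seq f m | m <- iota a.+1 (b - a.+1)] (f b) =
            [seq f m | m <- iota a.+1 (b - a)].
    rewrite -cats1 (_ : b - a = (b - a.+1) + 1); last by lia.
    by rewrite iotaD map_cat /= (_ : a.+1 + (b - a.+1) = b) //; lia.
  by apply: fin_path_iota => k _; apply: Hf.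
move=> z /mapP [m]; rewrite mem_iota => Hm ->; apply: Hc; lia.
Qed.

Lemma Vp_last_Ap x s : fin_path (Ap E p) x s -> VP x -> VP (last x s).
Proof.
elim: s x => [|y s IH] x //= [[_ [Hy _]] Hp] _.
exact: IH.
Qed.

Lemma cycle_false : Ap E p p p -> forall y, VP y -> y <> p -> False.
Proof.
move=> [_ [_ [_ [_ [s [Hs Hn]]]]]] y Hy Hyp.
pose v := fun _ : nat => p; pose bs := fun _ : nat => s.
have Hb : forall k, fin_path RE (v k) (rcons (bs k) (v k.+1)) by [].
have Hq : is_path RE (InfP (bF v bs)) by move=> n; exact: (bF_path Hb).
have := Hy _ Hq I.
case; first by rewrite /= -[0]/(bpos bs 0) bF_bpos.
move=> n /=; have [k [j [Hj ->]]] := bdecomp bs n.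
rewrite bF_pos // /v /bs.
case: j Hj => [|j] Hj /=; first by move=> /esym.
move=> Hny; apply: (Hn y) => //; rewrite -Hny; apply: mem_nth; exact: Hj.
Qed.

Lemma ping a b : Ap E p p a -> VP b -> b <> p -> b <> a ->
  forall (sg : gpath T) m, is_path RE sg -> maximal RE sg -> node_at sg m a ->
  exists m', m < m' /\ node_at sg m' b.
Proof.
move=> [_ [_ [_ [_ [s [Hs Hn]]]]]] Hb Hbp Hba sg m Hp Hm Hma.
have [s2 [Hp2 [Hm2 [Hst2 Hnode]]]] := suffix Hp Hm Hma.
have Hq : is_path RE (prep p s s2) by apply: prep_path => //; rewrite Hst2.
have := Hb _ Hq (prep_max _ _ Hm2) (prep_start _ _ _).
move/prep_occurs => [].
  rewrite inE => /orP [/eqP //|Hbs]; by case: (Hn b).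
move=> [j Hj]; exists (m + j); split; last exact: Hnode.
case: j Hj => [|j] Hj; last by rewrite addnS ltnS leq_addr.
by move/node_at0: Hj; rewrite Hst2.
Qed.

Section K.
Variables y1 y2 : T.
Hypotheses (H12 : y1 <> y2) (Ha1 : Ap E p p y1) (Ha2 : Ap E p p y2).

Lemma y_ne_p : y1 <> p /\ y2 <> p.
Proof.
have V1 : VP y1 by case: Ha1 => _ [].
have V2 : VP y2 by case: Ha2 => _ [].
split => E1.
  have Hpp : Ap E p p p := eq_ind _ (fun z => Ap E p p z) Ha1 _ E1.
  by apply: (cycle_false Hpp V2) => E2; apply: H12; rewrite E1 E2.
have Hpp : Ap E p p p := eq_ind _ (fun z => Ap E p p z) Ha2 _ E1.
by apply: (cycle_false Hpp V1) => E2; apply: H12; rewrite E1 E2.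
Qed.

Lemma Kinf (sg : gpath T) m : is_path RE sg -> maximal RE sg -> node_at sg m y1 ->
  forall N, exists m', N <= m' /\ node_at sg m' y1.
Proof.
move=> Hp Hm Hy N.
have V1 : VP y1 by case: Ha1 => _ [].
have V2 : VP y2 by case: Ha2 => _ [].
have [n1 n2] := y_ne_p.
elim: N => [|N [m' [HN Hm']]]; first by exists m.
have [m2 [Hlt2 H2]] := ping Ha1 V2 n2 (fun e => H12 (esym e)) Hp Hm Hm'.
have [m3 [Hlt3 H3]] := ping Ha2 V1 n1 H12 Hp Hm H2.
exists m3; split => //; lia.
Qed.

Lemma Kinf' (sg : gpath T) m : is_path RE sg -> maximal RE sg -> node_at sg m y1 ->
  exists f, sg = InfP f /\ forall N, exists m', N <= m' /\ f m' = y1.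
Proof.
move=> Hp Hm Hy; have K := Kinf Hp Hm Hy.
case: sg Hp Hm Hy K => [x s|f] Hp Hm Hy K.
  have [m' [H1 [H2 _]]] := K (size s).+1.
  by have := leq_trans H1 H2; rewrite ltnn.
by exists f; split.
Qed.

End K.
End Main.

Lemma belast_iota_map (T : finType) (f : nat -> T) a n :
  belast (f a) [seq f m | m <- iota a.+1 n] = [seq f m | m <- iota a n].
Proof. by elim: n a => [|n IH] a //=; rewrite IH. Qed.

Lemma blocks_same (T : finType) (E : rel T) (p : T) (v : nat -> T) (bs : nat -> seq T)
  (o : nat) (h : nat -> T) (W : T -> Prop) :
  (forall k, fin_path (fun a b => E a b) (v k) (rcons (bs k) (v k.+1))) ->
  (forall k, h k = v (k + o)) -> (forall k z, z \in bs k -> ~ Vp E p z) ->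
  (forall k, k < o -> ~ Vp E p (v k)) -> (forall y, W y -> Vp E p y) ->
  same_first_order W (InfP (bF v bs)) (InfP h).
Proof.
move=> Hb Hh Hbs Hv HW.
have [l Hl] := ex_first_occ W h; exists l; split => //.
apply: (transfer (g := fun k => bpos bs (k + o))) Hl.
- by move=> k; rewrite addSn; apply: bpos_lt.
- by move=> k; rewrite bF_bpos Hh.
move=> n /HW; have [k [j [Hj ->]]] := bdecomp bs n.
rewrite bF_pos //; case: j Hj => [|j] Hj /=.
  move=> Hvk; rewrite addn0; exists (k - o).
  case: (ltnP k o) => Hko; first by case: (Hv _ Hko).
  by rewrite subnK.
by move=> HV; case: (Hbs k (nth (v k) (bs k) j)) => //; apply: mem_nth.
Qed.

Theorem lemma4p9 (T : finType) (E : rel T) (p s1 s2 : T) (i : nat) :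
  is_CFG E ->
  s1 != s2 -> E p s1 -> E p s2 ->
  #|[set y | E p y]| = 2 ->
  (exists y1 y2, y1 <> y2 /\ Ap E p p y1 /\ Ap E p p y2) ->
  (i = 1 \/ i = 2) ->
  let si := if i == 1 then s1 else s2 in
  let W := fun y => Vp E p y /\ y <> p in
  (forall q, is_path (fun a b => E a b) q -> maximal (fun a b => E a b) q ->
     start q = si ->
     exists q', is_path (Ap E p) q' /\ maximal (Ap E p) q' /\
                Vi E p si (start q') /\ same_first_order W q q')
  /\
  (forall q', is_path (Ap E p) q' -> maximal (Ap E p) q' ->
     Vi E p si (start q') ->
     exists q, is_path (fun a b => E a b) q /\ maximal (fun a b => E a b) q /\
               start q = si /\ same_first_order W q q').
Proof.
move=> _ _ Hps1 Hps2 _ [y1 [y2 [H12 [Ha1 Ha2]]]] _ si W.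
have Hpsi : E p si by rewrite /si; case: ifP.
have V1 : Vp E p y1 by case: Ha1 => _ [].
have [n1 n2] := y_ne_p H12 Ha1 Ha2.
have WV : forall y, W y -> Vp E p y by move=> y [].
split.
- move=> q Hq Hm Hst.
  have Hr : is_path (fun a b => E a b) (prep p [::] q) by apply: prep_path => //=; rewrite Hst.
  have := V1 _ Hr (prep_max _ _ Hm) (prep_start _ _ _).
  move/prep_occurs => [].
    by rewrite inE => /eqP.
  move=> [m Hmy].
  have [f [Eq Hinf]] := Kinf' H12 Ha1 Ha2 Hq Hm Hmy.
  subst q.
  have Hf : forall n, E (f n) (f n.+1) := Hq.
  have Hf0 : f 0 = si := Hst.
  have Hex : forall a, exists m, (a < m) && pb (Vp E p (f m)).
    move=> a; have [m' [Hm1 Hm2]] := Hinf a.+1; exists m'.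
    by rewrite Hm1; apply/pbP; rewrite Hm2.
  have Hex0 : exists m, pb (Vp E p (f m)).
    by have [m' [_ Hm2]] := Hinf 0; exists m'; apply/pbP; rewrite Hm2.
  pose nxt a := ex_minn (Hex a).
  pose g k := iter k nxt (ex_minn Hex0).
  have Hg k : g k < g k.+1 /\ Vp E p (f (g k.+1)) /\
              forall c, g k < c < g k.+1 -> ~ Vp E p (f c).
    rewrite /g iterS -/(g k) /nxt; case: ex_minnP => m' /andP [H1 /pbP H2] Hmin.
    split => //; split => // c /andP [Hc1 Hc2] Vc.
    have := Hmin c; rewrite Hc1 /=.
    by case: (pbP (Vp E p (f c))) => // _ /(_ isT); lia.
  have Hg0 : Vp E p (f (g 0)) /\ forall c, c < g 0 -> ~ Vp E p (f c).
    rewrite /g /=; case: ex_minnP => m' /pbP H2 Hmin; split => // c Hc Vc.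
    have := Hmin c; case: (pbP (Vp E p (f c))) => // _ /(_ isT); lia.
  have HgV k : Vp E p (f (g k)) by case: k => [|k]; [case: Hg0|case: (Hg k) => _ []].
  have Hgk k : k <= g k.
    elim: k => [|k IH] //; case: (Hg k) => H _; lia.
  pose h k := f (g k).
  exists (InfP h); split.
    move=> k; case: (Hg k) => [H1 [H2 H3]].
    by rewrite /h; apply: seg_Ap => //; apply: HgV.
  split => //; split.
    split; first exact: HgV.
    exists [seq f m | m <- iota 1 (g 0)]; split.
      by rewrite -Hf0; apply: fin_path_iota => k _; apply: Hf.
    split; first by rewrite -Hf0 last_iota_map.
    rewrite -Hf0 belast_iota_map => z /mapP [c]; rewrite mem_iota => Hc ->.
    by case: Hg0 => _; apply; lia.
  have [l Hl] := ex_first_occ W h; exists l; split => //.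
  apply: (transfer (g := g)) Hl.
  - by move=> k; case: (Hg k).
  - by [].
  move=> n /WV Vn.
  have Hn0 : g 0 <= n.
    by rewrite leqNgt; apply/negP => Hc; case: Hg0 => _ /(_ _ Hc).
  have Hexk : exists k, n < g k by exists n.+1; have := Hgk n.+1; lia.
  case: (ex_minnP Hexk) => k0 Hk0 Hmin.
  case: k0 Hk0 Hmin => [|k] Hk Hmin; first by lia.
  have Hgk' : g k <= n.
    rewrite leqNgt; apply/negP => Hc; have := Hmin k Hc; lia.
  exists k; apply/eqP; rewrite eqn_leq Hgk' /=.
  rewrite leqNgt; apply/negP => Hc.
  by case: (Hg k) => _ [_ /(_ n)]; apply => //; rewrite Hc.
- move=> q' Hq' Hm' Hvi.
  case: q' Hq' Hm' Hvi => [x s|h] Hq' Hm' Hvi.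
    have Vv : Vp E p (last x s) by apply: Vp_last_Ap => //; case: Hvi.
    have [mu [Hmu1 [Hmu2 Hmu3]]] := ex_maximal E y1.
    have [_ [_ [_ [_ [sA [HsA HnA]]]]]] := Ha1.
    have Hr : is_path (fun a b => E a b) (prep p sA mu) by apply: prep_path => //; rewrite Hmu3.
    have Hrm := prep_max p sA Hmu2.
    have [n Hn] := Vv _ Hr Hrm (prep_start _ _ _).
    have Hy := prep_node_at p sA (node_at_start mu); rewrite Hmu3 in Hy.
    have [f [Eq Hinf]] := Kinf' H12 Ha1 Ha2 Hr Hrm Hy.
    rewrite Eq in Hr Hn.
    have Hex : exists c, (n < c) && pb (Vp E p (f c)).
      have [m' [Hm1 Hm2]] := Hinf n.+1; exists m'.
      by rewrite Hm1; apply/pbP; rewrite Hm2.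
    case: (ex_minnP Hex) => c /andP [Hc1 /pbP Hc2] Hmin.
    exfalso; move: Hm' => /= Hm'; apply: Hm'; exists (f c); rewrite -[last x s]Hn.
    apply: seg_Ap => //; first by rewrite Hn.
    move=> c' /andP [H1 H2] V'; have := Hmin c'; rewrite H1 /=.
    by case: (pbP (Vp E p (f c'))) => // _ /(_ isT); lia.
  have Hseg k : exists sg, fin_path (fun a b => E a b) (h k) (rcons sg (h k.+1)) /\
                          forall z, z \in sg -> ~ Vp E p z.
    by case: (Hq' k) => _ [_ [_ [_ H]]].
  pose seg k := proj1_sig (constructive_indefinite_description _ (Hseg k)).
  have Hsg k : fin_path (fun a b => E a b) (h k) (rcons (seg k) (h k.+1)) /\
               forall z, z \in seg k -> ~ Vp E p z.
    exact: (proj2_sig (constructive_indefinite_description _ (Hseg k))).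
  case: Hvi => /= Vh0 [s0 [Hs0 [Hl0 Hb0]]].
  case: s0 Hs0 Hl0 Hb0 => [|a s''] Hs0 Hl0 Hb0.
    exists (InfP (bF h seg)); split; first by move=> n; exact: (bF_path (fun k => proj1 (Hsg k))).
    split => //; split; first by rewrite /= -[0]/(bpos seg 0) bF_bpos.
    apply: (blocks_same (E := E) (p := p) (o := 0)) => //.
    - by move=> k; case: (Hsg k).
    - by move=> k; rewrite addn0.
    - by move=> k z; case: (Hsg k) => _; apply.
  pose v k := if k is k'.+1 then h k' else si.
  pose bs k := if k is k'.+1 then seg k' else belast a s''.
  have Hb : forall k, fin_path (fun a b => E a b) (v k) (rcons (bs k) (v k.+1)).
    case => [|k] /=; last by case: (Hsg k).
    by rewrite -Hl0 /= -lastI.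
  exists (InfP (bF v bs)); split; first by move=> n; exact: (bF_path Hb).
  split => //; split; first by rewrite /= -[0]/(bpos bs 0) bF_bpos.
  apply: (blocks_same (E := E) (p := p) (o := 1)) => //.
  - by move=> k; rewrite addn1.
  - case => [|k] z /=; last by case: (Hsg k) => _; apply.
    by move=> Hz; apply: Hb0; rewrite /= inE Hz orbT.
  - case => [|k] // _ /=; apply: Hb0; by rewrite /= inE eqxx.
Qed.
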